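(* Let $G$ be a finite group and $p$ a prime dividing $|G|$ such that $G$ has a normal cyclic Sylow $p$-subgroup $P$, and let $H$ be the unique subgroup of $P$ of order $p$. If $x\in G$ is such that the coset $Hx$ is not contained in the conjugacy class $x^G$ of $x$, then $x\in C_G(P)$.
   Context: $x^G=\{g^{-1}xg: g\in G\}$ is the conjugacy class of $x$, and $C_G(P)$ is the centralizer of $P$ in $G$. *)

(* Defs.v *)
From mathcomp Require Import all_boot all_fingroup all_solvable.

(* Main.v *)
Require Import Defs.
From mathcomp Require Import all_boot all_fingroup all_solvable.
Set Implicit Arguments. Unset Strict Implicit. Unset Printing Implicit Defensive.
Local Open Scope group_scope.

Theorem lemma4p1 (gT : finGroupType) (G P H : {group gT}) (p : nat) (x : gT) :
  prime p -> (p %| #|G|)%N ->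
  P \in 'Syl_p(G) -> P <| G -> cyclic P ->
  H \subset P -> #|H| = p ->
  x \in G -> ~~ (H :* x \subset x ^: G) ->
  x \in 'C_G(P).
Proof.
move=> pp _ sylP nPG cycP sHP cardH xG.
apply: contraR => nCx.
have [sPG nPG'] := andP nPG.
have abP : abelian P by exact: cyclic_abelian.
have pP : p.-group P by apply: (@pHall_pgroup _ _ G); move: sylP; rewrite inE.
have xNP : x^-1 \in 'N(P) by rewrite groupV; apply: (subsetP nPG').
have [z zP nczx] : exists2 z, z \in P & z ^ x^-1 != z.
  case: (boolP [exists z in P, z ^ x^-1 != z]).
    by case/exists_inP => z; exists z.
  move/exists_inPn => H1; case/negP: nCx; rewrite inE xG /=.
  apply/centP => y yP; have := H1 y yP; rewrite negbK => /eqP.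
  by rewrite conjgE invgK => E; rewrite /commute -{2}E !mulgA mulgKV.
set w := z^-1 * z ^ x^-1.
have zaP : z ^ x^-1 \in P by rewrite memJ_norm.
have wP : w \in P by rewrite groupM ?groupV.
have w1 : w != 1.
  by rewrite /w -eq_mulVg1 eq_sym.
have sHw : H \subset <[w]>.
  have swP : <[w]> \subset P by rewrite cycle_subG.
  have pw : p.-group <[w]> := pgroupS swP pP.
  have ntw : <[w]>%G != 1%G by rewrite -val_eqE /= cycle_eq1.
  have [_ pdw _] := pgroup_pdiv pw ntw.
  have [y yw oy] := Cauchy pp pdw.
  have yP : y \in P by apply: (subsetP swP).
  have /eqP <- : <[y]> == H :> {set gT}.
    by rewrite (eq_subG_cyclic cycP) ?cycle_subG // -orderE oy cardH.
  by rewrite cycle_subG.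
apply/subsetP => u /rcosetP [h hH ->].
have /cycleP [n ->] := subsetP sHw h hH.
have zG : z ^+ n \in G by rewrite groupX // (subsetP sPG).
have -> : w ^+ n * x = x ^ (z ^+ n).
  rewrite /w expgMn; last by by apply: (centsP abP); rewrite ?groupV.
  rewrite expVgn -conjXg !conjgE invgK !mulgA mulgKV.
  by [].
exact: memJ_class.
Qed.
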